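(* Let $(\mathcal X,\mathcal B,\pi)$ be a measure space with $\pi$ $\sigma$-finite, $r$ measurable, $\{\varepsilon(x)\}$ an arbitrary real-valued random field, $\alpha\in(0,1)$, and $p_{\rm ref}\in\mathcal P_\pi$. Assume $0<Q_*<\infty$ with $Q\le Q_*$ everywhere, and $$\alpha>\Bigl(\int\frac{Q_*}{Q_*-Q(x)}\,p_{\rm ref}(x)\,\pi(dx)\Bigr)^{-1}.$$ Then the operator $L_N$ has a unique fixed point $w_*$ in $\mathcal P_{\mathbb P_{\rm ref}}$, and the constant $c_*:=\langle w_*,Q\rangle_{\rm ref}$ lies in $\bigl((1-\alpha)Q_*,\,Q_*\bigr]$.
   Context: $\mathcal P_\pi$ = probability densities w.r.t. $\pi$. $Q(x):=e^{r(x)}\mathbb E[e^{\varepsilon(x)}]$, $Q_*:=\operatorname*{ess\,sup}_\pi Q$; in the displayed condition the integrand is $+\infty$ where $Q=Q_*$ and the reciprocal of $+\infty$ is $0$. $\mathbb P_{\rm ref}(dx)=p_{\rm ref}(x)\pi(dx)$; $\mathcal P_{\mathbb P_{\rm ref}}$ = probability densities w.r.t. $\mathbb P_{\rm ref}$; $\langle f,g\rangle_{\rm ref}=\int fg\,d\mathbb P_{\rm ref}$. On the cone $\mathcal K=\{f\in L^1(\mathbb P_{\rm ref}):f>0\ \mathbb P_{\rm ref}\text{-a.s.}\}$, $L[f]=\alpha\langle f,Q\rangle_{\rm ref}+(1-\alpha)fQ$ and $L_N[f]=L[f]/\langle f,Q\rangle_{\rm ref}$. *)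

(* Defs.v *)
From HB Require Import structures.
From mathcomp Require Import all_boot all_order all_algebra.
From mathcomp Require Import all_classical all_reals all_analysis measurable_realfun ess_sup_inf.
Set Implicit Arguments. Unset Strict Implicit. Unset Printing Implicit Defensive.
Import Order.TTheory GRing.Theory Num.Theory.
Import numFieldNormedType.Exports.
Local Open Scope classical_set_scope.
Local Open Scope ring_scope.

Section defs.
Context {d : measure_display} {X : measurableType d} {R : realType}.
Variable pi : {measure set X -> \bar R}.

Definition is_density (p : X -> R) : Prop :=
  [/\ measurable_fun setT p, (forall x, 0 <= p x)
    & (\int[pi]_x (p x)%:E = 1)%E].

Variable p_ref : X -> R.

(* P_ref(dx) = p_ref(x) pi(dx).  Integral against P_ref: *)
Definition int_ref (f : X -> R) : \bar R := (\int[pi]_x (f x * p_ref x)%:E)%E.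

Definition dot_ref (f g : X -> R) : \bar R := int_ref (fun x => f x * g x).

(* "P_ref-a.s. P": the set where P fails has P_ref-measure 0, i.e.
   pi-a.e. on {p_ref > 0}. *)
Definition ae_ref (P : X -> Prop) : Prop :=
  {ae pi, forall x, 0 < p_ref x -> P x}.

Definition is_ref_density (w : X -> R) : Prop :=
  [/\ measurable_fun setT w, (forall x, 0 <= w x) & int_ref w = 1%E].

Definition in_cone (f : X -> R) : Prop :=
  [/\ measurable_fun setT f,
      (int_ref (fun x => (`|f x|)%R) < +oo)%E
    & ae_ref (fun x => 0 < f x)].

Variables (alpha : R) (Q : X -> R).

Definition Lop (f : X -> R) : X -> R :=
  fun x => alpha * fine (dot_ref f Q) + (1 - alpha) * f x * Q x.

Definition LNop (f : X -> R) : X -> R :=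
  fun x => Lop f x / fine (dot_ref f Q).

End defs.

Definition Qfun {d : measure_display} {X : measurableType d} {R : realType}
  {d' : measure_display} {Omega : measurableType d'}
  (P : probability Omega R) (r : X -> R) (eps : X -> Omega -> R) : X -> \bar R :=
  fun x => ((expR (r x))%:E * \int[P]_w (expR (eps x w))%:E)%E.

(* Main.v *)
Require Import Defs.
From HB Require Import structures.
From mathcomp Require Import all_boot all_order all_algebra.
From mathcomp Require Import all_classical all_reals all_analysis measurable_realfun ess_sup_inf.
From mathcomp Require Import ring lra.
Import Order.TTheory GRing.Theory Num.Theory.
Import numFieldNormedType.Exports.
Local Open Scope classical_set_scope.
Local Open Scope ring_scope.
Section real.
Context {R : realType}.
Definition hh (a c t : R) := a * c / (c - (1 - a) * t).

Lemma den_pos {a c t q : R} : 0 < a < 1 -> 0 <= t <= q -> (1-a)*q < c ->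
  [/\ (1-a)*t <= (1-a)*q, 0 < c - (1-a)*t, 0 < c & 0 <= (1-a)*q].
Proof.
move=> /andP[a0 a1] /andP[t0 tq] cq.
have q0 : 0 <= q by apply: le_trans tq.
have : (1-a)*t <= (1-a)*q by rewrite ler_wpM2l // subr_ge0 ltW.
have : 0 <= (1-a)*q by rewrite mulr_ge0 // subr_ge0 ltW.
split; lra.
Qed.

Lemma hh_pos {a c t q : R} : 0 < a < 1 -> 0 <= t <= q -> (1-a)*q < c -> 0 < hh a c t.
Proof.
move=> ha ht hc; have [_ d0 c0 _] := den_pos ha ht hc.
by rewrite /hh divr_gt0 // mulr_gt0 //; case/andP: ha.
Qed.

Lemma hh_le {a c t q : R} : 0 < a < 1 -> 0 <= t <= q -> (1-a)*q < c ->
  hh a c t <= a * c / (c - (1-a)*q).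
Proof.
move=> ha ht hc; have [d1 d0 c0 _] := den_pos ha ht hc.
rewrite /hh ler_pM2l ?mulr_gt0 //; last by case/andP: ha.
rewrite lef_pV2 ?posrE //; lra.
Qed.

Lemma hh_anti {a c c' t q : R} : 0 < a < 1 -> 0 <= t <= q -> (1-a)*q < c -> c <= c' ->
  hh a c' t <= hh a c t.
Proof.
move=> ha ht hc cc'.
have [d1 d0 c0 _] := den_pos ha ht hc.
have [d1' d0' c0' _] := den_pos ha ht (lt_le_trans hc cc').
case/andP: ha => a0 a1; case/andP: ht => t0 tq.
rewrite /hh ler_pdivrMr // mulrAC ler_pdivlMr //.
rewrite -!mulrA ler_pM2l //.
have : 0 <= (1 - a) * t by rewrite mulr_ge0 // subr_ge0 ltW.
nra.
Qed.

Lemma hh_fix (a c t : R) : c - (1-a)*t != 0 -> hh a c t * (c - (1-a)*t) = a * c.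
Proof. by move=> h; rewrite /hh divfK. Qed.

Lemma hh_lip {a c c' t q c0 : R} : 0 < a < 1 -> 0 <= t <= q -> (1-a)*q < c0 ->
  c0 <= c -> c0 <= c' ->
  `|hh a c t - hh a c' t| <= a * (1-a) * q / (c0 - (1-a)*q)^+2 * `|c - c'|.
Proof.
move=> ha ht hc0 h1 h2.
have [d1 d0 c0p _] := den_pos ha ht (lt_le_trans hc0 h1).
have [d1' d0' c0p' _] := den_pos ha ht (lt_le_trans hc0 h2).
have [_ e0 _ _] := den_pos ha ht hc0.
have [_ _ _ bq] := den_pos ha ht hc0.
case/andP: ha => a0 a1; case/andP: ht => t0 tq.
have -> : hh a c t - hh a c' t =
   (a * (1-a) * t) * (c' - c) / ((c - (1-a)*t) * (c' - (1-a)*t)).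
  rewrite /hh; field; apply/andP; split; rewrite gt_eqF //.
have e0' : 0 < c0 - (1 - a) * q by lra.
have b0 : 0 <= 1 - a by lra.
rewrite normrM normfV normrM (distrC c' c).
rewrite (ger0_norm (_ : 0 <= a * (1-a) * t)); last by rewrite !mulr_ge0 // ltW.
rewrite (gtr0_norm (_ : 0 < (c - (1 - a) * t) * (c' - (1 - a) * t))); last by rewrite mulr_gt0.
rewrite [X in X <= _]mulrAC ler_wpM2r //.
have ht' : a * (1-a) * t <= a * (1-a) * q.
  by rewrite ler_wpM2l // mulr_ge0 // ltW.
have b1 : 0 < 1 - a by lra.
apply: ler_pM => //.
- by rewrite !mulr_ge0 // ltW.
- by rewrite invr_ge0 ltW // mulr_gt0.
rewrite lef_pV2 ?posrE ?mulr_gt0 ?exprn_gt0 //.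
rewrite expr2; apply: ler_pM; lra.
Qed.
End real.

Lemma meas_inv_pos {d} {X : measurableType d} {R : realType} (f : X -> R) :
  measurable_fun setT f -> (forall x, 0 < f x) -> measurable_fun setT (fun x => (f x)^-1).
Proof.
move=> mf f0.
have mO : measurable (`]0, +oo[%classic : set R) by [].
change (measurable_fun setT (GRing.inv \o f)).
apply: (measurable_comp mO) => //.
- by move=> _ [x _ <-]; rewrite /= in_itv /= andbT f0.
- apply: open_continuous_measurable_fun; first exact: interval_open.
  move=> x; rewrite inE /= in_itv /= andbT => x0.
  by apply: inv_continuous; rewrite gt_eqF.
Qed.
Section integ.
Context {d} {X : measurableType d} {R : realType} (pi : {measure set X -> \bar R}).
Variables (p : X -> R) (mp : measurable_fun setT p) (p0 : forall x, 0 <= p x)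
  (p1 : (\int[pi]_x (p x)%:E = 1)%E).

Lemma int_p : pi.-integrable setT (EFin \o p).
Proof.
apply/integrableP; split; first exact/measurable_EFinP.
rewrite (@eq_integral _ _ _ _ _ (fun x => (p x)%:E)).
  by rewrite p1 ltry.
by move=> x _; rewrite /= ger0_norm.
Qed.

Lemma intg_bnd (f : X -> R) M : 0 <= M -> measurable_fun setT f -> (forall x, `|f x| <= M) ->
  pi.-integrable setT (fun x => (f x * p x)%:E).
Proof.
move=> M0 mf fM.
eapply le_integrable; last exact: (integrableZl measurableT M int_p).
- exact: measurableT.
- by apply/measurable_EFinP; exact: measurable_funM.
- move=> x _; rewrite /= lee_fin normrM (ger0_norm (p0 x)).
  by rewrite [X in _ <= X]ger0_norm ?mulr_ge0 // ler_wpM2r.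
Qed.

Variables (a q : R) (ha : 0 < a < 1) (q0 : 0 < q) (t : X -> R)
  (mt : measurable_fun setT t) (tq : forall x, 0 <= t x <= q).

Definition gg c := (\int[pi]_x (hh a c (t x) * p x)%:E)%E.

Lemma meas_h c : (1-a)*q < c -> measurable_fun setT (fun x => hh a c (t x)).
Proof.
move=> hc; apply: measurable_funM; first exact: measurable_cst.
apply: meas_inv_pos.
  apply: measurable_funB; first exact: measurable_cst.
  by apply: measurable_funM => //; exact: measurable_cst.
by move=> x; have [] := den_pos ha (tq x) hc.
Qed.

Lemma int_h c : (1-a)*q < c -> pi.-integrable setT (fun x => (hh a c (t x) * p x)%:E).
Proof.
move=> hc; apply: (@intg_bnd _ (a * c / (c - (1-a)*q))).
- case/andP: ha => a0 a1.
  have bq : 0 <= (1-a)*q by rewrite mulr_ge0 // ?subr_ge0 ltW.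
  have c0 : 0 < c by lra.
  have e0 : 0 < c - (1-a)*q by lra.
  by rewrite divr_ge0 ?mulr_ge0 // ltW.
- exact: meas_h.
- move=> x; rewrite ger0_norm; first exact: hh_le ha (tq x) hc.
  exact: ltW (hh_pos ha (tq x) hc).
Qed.

Lemma gg_fin c : (1-a)*q < c -> gg c = (fine (gg c))%:E.
Proof. by move=> hc; rewrite fineK // integrable_fin_num // int_h. Qed.

Lemma gg_ge0 c : (1-a)*q < c -> (0 <= gg c)%E.
Proof.
move=> hc; apply: integral_ge0 => x _; rewrite lee_fin mulr_ge0 //.
exact: ltW (hh_pos ha (tq x) hc).
Qed.

Lemma gg_lip c0 c c' : (1-a)*q < c0 -> c0 <= c -> c0 <= c' ->
  `|fine (gg c) - fine (gg c')| <= a * (1-a) * q / (c0 - (1-a)*q)^+2 * `|c - c'|.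
Proof.
move=> h0 h1 h2.
have hc := lt_le_trans h0 h1; have hc' := lt_le_trans h0 h2.
set K := a * (1-a) * q / (c0 - (1-a)*q)^+2.
have E : ((fine (gg c) - fine (gg c'))%:E =
   \int[pi]_x ((hh a c (t x) - hh a c' (t x)) * p x)%:E)%E.
  rewrite EFinB -gg_fin // -gg_fin // /gg -integralB_EFin //; last 2 first.
  - exact: int_h.
  - exact: int_h.
  by apply: eq_integral => x _; rewrite -EFinB mulrBl.
rewrite -lee_fin -abse_EFin E.
have mF : measurable_fun setT (fun x => ((hh a c (t x) - hh a c' (t x)) * p x)%:E).
  apply/measurable_EFinP; apply: measurable_funM => //.
  by apply: measurable_funB; apply: meas_h.
apply: le_trans (le_abse_integral _ measurableT mF) _.
apply: (@le_trans _ _ (\int[pi]_x ((K * `|c - c'|) * p x)%:E)%E).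
  apply: ge0_le_integral => //.
  - by apply: measurableT_comp.
  - by apply/measurable_EFinP; apply: measurable_funM => //; exact: measurable_cst.
  - move=> x _; rewrite abse_EFin lee_fin normrM (ger0_norm (p0 x)) ler_wpM2r //.
    exact: hh_lip ha (tq x) h0 h1 h2.
under eq_integral do rewrite EFinM.
by rewrite integralZl // ?p1 ?mule1 //; exact: int_p.
Qed.

Lemma gg_q : (gg q <= 1)%E.
Proof.
have hq : (1-a)*q < q by case/andP: ha => a0 a1; have := mulr_gt0 a0 q0; lra.
rewrite -p1; apply: ge0_le_integral => //.
- by move=> x _; rewrite lee_fin mulr_ge0 // ltW // (hh_pos ha (tq x) hq).
- by apply/measurable_EFinP; apply: measurable_funM => //; exact: meas_h.
- by apply/measurable_EFinP.
- move=> x _; rewrite lee_fin ler_piMl //.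
  apply: le_trans (hh_le ha (tq x) hq) _.
  have -> : q - (1-a)*q = a * q by ring.
  by rewrite divff // mulf_neq0 // gt_eqF //; case/andP: ha.
Qed.


Lemma max_lip (c0 u v : R) : `|Num.max u c0 - Num.max v c0| <= `|u - v|.
Proof.
have n1 := ler_norm (u - v).
have n2 := ler_norm (v - u); rewrite distrC in n2.
rewrite ler_norml; case: (leP u c0) => hu; case: (leP v c0) => hv; apply/andP; split; lra.
Qed.

Lemma exists_root c0 : (1-a)*q < c0 -> c0 <= q -> (1 < gg c0)%E ->
  exists c, [/\ c0 <= c, c <= q & gg c = 1%E].
Proof.
move=> h0 h0q g1.
set K := a*(1-a)*q/(c0-(1-a)*q)^+2.
have K0 : 0 <= K.
  case/andP: ha => a0 a1.
  by rewrite /K divr_ge0 ?sqr_ge0 // !mulr_ge0 ?subr_ge0 // ltW.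
pose G c := fine (gg (Num.max c c0)).
have maxle x : c0 <= Num.max x c0 by rewrite le_max lexx orbT.
have Glip x y : `|G x - G y| <= K * `|x - y|.
  apply: le_trans (gg_lip _ _ _ h0 (maxle x) (maxle y)) _.
  by rewrite ler_wpM2l // max_lip.
have Gcont : continuous G.
  move=> x; apply/cvgrPdist_lt => e e0.
  have eK : 0 < e / (K + 1) by rewrite divr_gt0 // ltr_wpDl.
  near=> y.
  have hxy : `|x - y| < e / (K+1).
    near: y; apply: (@cvgr_dist_lt _ _ _ _ _ id) => //.
  apply: le_lt_trans (Glip x y) _.
  apply: le_lt_trans (ler_wpM2l K0 (ltW hxy)) _.
  rewrite mulrA ltr_pdivrMr ?ltr_wpDl //.
  have -> : e * (K + 1) = K * e + e by ring.
  lra.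
have Gc0 : G c0 = fine (gg c0) by rewrite /G maxxx.
have Gq : G q = fine (gg q) by rewrite /G max_l.
have Gq1 : G q <= 1.
  by rewrite Gq -lee_fin -gg_fin ?gg_q //; case/andP: ha => a0 a1; have := mulr_gt0 a0 q0; lra.
have Gc01 : 1 <= G c0 by rewrite Gc0 -lee_fin -gg_fin // ltW.
have hmid : Num.min (G c0) (G q) <= 1 <= Num.max (G c0) (G q).
  by rewrite ge_min le_max Gq1 Gc01 orbT.
have [c cI Gc] := IVT h0q (continuous_subspaceT Gcont) hmid.
exists c; move: cI; rewrite in_itv /= => /andP[cc0 cq]; split => //.
by rewrite gg_fin ?(lt_le_trans h0) // -Gc /G max_l.
Unshelve. all: by end_near.
Qed.


Lemma cn_lim : (fun n : nat => (1-a)*q + a*q*(n.+1%:R)^-1) @ \oo --> (1-a)*q.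
Proof.
rewrite -[X in _ --> X]addr0; apply: cvgD; first exact: cvg_cst.
rewrite -(mulr0 (a*q)); apply: cvgM; first exact: cvg_cst.
exact: cvg_harmonic.
Qed.

Lemma hh_lim (u pp : R) : 0 <= u < q ->
  (fun n : nat => hh a ((1-a)*q + a*q*(n.+1%:R)^-1) u * pp) @ \oo -->
  a * (q / (q - u)) * pp.
Proof.
move=> /andP[u0 uq].
have b0 : 0 < 1 - a by case/andP: ha => a0 a1; lra.
have nz : (1-a)*q - (1-a)*u != 0.
  by rewrite -mulrBr mulf_neq0 // gt_eqF // subr_gt0.
have -> : a * (q / (q - u)) * pp = a * ((1-a)*q) * ((1-a)*q - (1-a)*u)^-1 * pp.
  rewrite -mulrBr; field; rewrite gt_eqF ?subr_gt0 //= gt_eqF //.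
apply: cvgM; last exact: cvg_cst.
apply: cvgM; first by apply: cvgM; [exact: cvg_cst | exact: cn_lim].
apply: cvgV => //; apply: cvgB; [exact: cn_lim | exact: cvg_cst].
Qed.


Lemma exists_c0 (F : X -> \bar R) :
  (forall x, F x = (if t x == q then +oo else (q / (q - t x))%:E) * (p x)%:E)%E ->
  (1 < a%:E * \int[pi]_x F x)%E ->
  exists c0, [/\ (1-a)*q < c0, c0 <= q & (1 < gg c0)%E].
Proof.
move=> FE hI.
case/andP: ha => a0 a1.
have b0 : 0 < 1 - a by lra.
pose cn (n : nat) := (1-a)*q + a*q*(n.+1%:R)^-1.
have cn_gt n : (1-a)*q < cn n.
  by rewrite /cn ltrDl mulr_gt0 ?mulr_gt0 ?invr_gt0.
have cn_le n : cn n <= q.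
  rewrite /cn; have : (n.+1%:R : R)^-1 <= 1 by rewrite invf_le1 ?ler1n.
  have aq : 0 < a * q by rewrite mulr_gt0.
  move=> h; have := ler_wpM2l (ltW aq) h; rewrite mulr1.
  have : (1-a)*q = q - a*q by ring.
  set z := a * q / _; set w := a * q; set v := (1-a)*q; lra.
have cn_nd m n : (m <= n)%N -> cn n <= cn m.
  move=> mn; rewrite /cn lerD2l; apply: ler_wpM2l; first by rewrite mulr_ge0 // ltW.
  by rewrite lef_pV2 ?posrE ?ltr0Sn // ler_nat.
pose g' n x := ((hh a (cn n) (t x)) * p x)%:E.
have mg' n : measurable_fun setT (g' n).
  by apply/measurable_EFinP; apply: measurable_funM => //; exact: meas_h.
have g'0 n x : (0 <= g' n x)%E.
  by rewrite lee_fin mulr_ge0 // ltW // (hh_pos ha (tq x) (cn_gt n)).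
have nd x : nondecreasing_seq (g'^~ x).
  move=> m n mn; rewrite lee_fin ler_wpM2r //.
  exact: hh_anti ha (tq x) (cn_gt n) (cn_nd _ _ mn).
have lim x : g'^~ x @ \oo --> (a%:E * F x)%E.
  case: (eqVneq (t x) q) => txq; last first.
    rewrite FE (negbTE txq) -!EFinM mulrA.
    apply: cvg_EFin; first by apply: nearW.
    apply: hh_lim; case/andP: (tq x) => -> h /=.
    by rewrite lt_neqAle txq.
  rewrite FE txq eqxx.
  have [px0|px0] := eqVneq (p x) 0.
    rewrite px0 !mule0.
    have -> : g'^~ x = fun _ => 0%E by apply/funext => n; rewrite /g' px0 mulr0.
    exact: cvg_cst.
  have pxp : 0 < p x by rewrite lt_neqAle eq_sym px0 p0.
  rewrite mulyr gtr0_sg // mul1e mulry gtr0_sg ?mul1e //.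
  apply/cvgeryP; apply/cvgryPge => A.
  have : \forall n \near \oo, A / ((1-a) * p x) <= n%:R :> R.
    by move: (@cvgr_idn R) => /cvgryPge; apply.
  apply: filterS => n hn.
  rewrite /= txq.
  have -> : hh a (cn n) q = cn n / q * n.+1%:R.
    rewrite /hh /cn; field.
    have hn1 : 0 < 1 + n%:R :> R by have : 0 <= n%:R :> R by []; lra.
    have -> : (1 - a) * q * (1 + n%:R) + a * q + - ((1 - a) * q) * (1 + n%:R) = a * q by ring.
    by rewrite !gt_eqF ?mulr_gt0.
  have y1 : 1 - a <= cn n / q by rewrite ler_pdivlMr // ltW.
  move: hn; rewrite ler_pdivrMr ?mulr_gt0 // => hn.
  set y := cn n / q in y1 *.
  have -> : n.+1%:R = n%:R + 1 :> R by rewrite -natr1.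
  have m0 : 0 <= n%:R :> R by [].
  set m := n%:R : R in hn m0 *.
  have h1 : 0 <= (y - (1-a)) * ((m+1) * p x).
    by rewrite mulr_ge0 ?subr_ge0 // mulr_ge0 // ?addr_ge0 // ltW.
  have h2 : 0 <= (1-a) * p x by rewrite mulr_ge0 // ltW.
  nra.
have mF : measurable_fun setT F.
  have -> : F = fun x => ((a^-1)%:E * (a%:E * F x))%E.
    apply/funext => x; rewrite muleA -EFinM mulVf ?gt_eqF // mul1e //.
  apply: measurable_funeM; exact: emeasurable_fun_cvg mg' (fun x _ => lim x).
have F0 x : (0 <= F x)%E.
  rewrite FE; apply: mule_ge0; last by rewrite lee_fin.
  case: ifPn => // /eqP tx; rewrite lee_fin divr_ge0 ?ltW //.
  by case/andP: (tq x) => _ h; rewrite subr_gt0 lt_neqAle h andbT; apply/eqP.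
have mct := @cvg_monotone_convergence _ _ _ pi _ measurableT g' mg' (fun n x _ => g'0 n x) (fun x _ => nd x).
have E : (\int[pi]_x limn (g'^~ x) = a%:E * \int[pi]_x F x)%E.
  rewrite -ge0_integralZl //; last by rewrite lee_fin ltW.
  by apply: eq_integral => x _; apply: cvg_lim.
rewrite E in mct.
apply: contrapT => nE.
have H n : (gg (cn n) <= 1)%E.
  rewrite leNgt; apply/negP => h; apply: nE; exists (cn n); split => //.
have H' : \forall n \near \oo, (\int[pi]_x g' n x <= 1)%E by apply: nearW.
have := lime_le (cvgP _ mct) H'.
by move=> /(_ _); rewrite (cvg_lim _ mct) // leNgt hI.
Qed.


Lemma ae_false : {ae pi, forall x, 0 < p x -> False} -> False.
Proof.
move=> H.
have : (\int[pi]_x (p x)%:E = \int[pi]_x (cst 0%E) x)%E.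
  apply: ae_eq_integral => //.
  - exact/measurable_EFinP.
  apply: filterS H => x H _; apply/eqP; rewrite /= eqe eq_le p0 andbT.
  by rewrite leNgt; apply/negP => /H.
by rewrite p1 integral0 => /eqP; rewrite onee_eq0.
Qed.

Lemma cmp_int (f g : X -> R) : measurable_fun setT f -> measurable_fun setT g ->
  (forall x, 0 <= f x) -> (forall x, 0 <= g x) ->
  {ae pi, forall x, 0 < p x -> f x <= g x} ->
  (\int[pi]_x (f x * t x * p x)%:E <= \int[pi]_x (g x * t x * p x)%:E)%E.
Proof.
move=> mf mg f0 g0 H.
apply: ae_ge0_le_integral => //.
- by move=> x _; rewrite lee_fin !mulr_ge0 //; case/andP: (tq x).
- by apply/measurable_EFinP; do 2 apply: measurable_funM => //.
- by move=> x _; rewrite lee_fin !mulr_ge0 //; case/andP: (tq x).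
- by apply/measurable_EFinP; do 2 apply: measurable_funM => //.
apply: filterS H => x H _; rewrite lee_fin.
have [px|px] := eqVneq (p x) 0; first by rewrite px !mulr0.
have pxp : 0 < p x by rewrite lt_neqAle eq_sym px p0.
by rewrite ler_wpM2r // ler_wpM2r ?H //; case/andP: (tq x).
Qed.

Lemma dot_id c : (1-a)*q < c -> gg c = 1%E ->
  (\int[pi]_x (hh a c (t x) * t x * p x)%:E = c%:E)%E.
Proof.
move=> hc g1.
case/andP: ha => a0 a1.
have b0 : 0 < 1 - a by lra.
have E x : hh a c (t x) * t x * p x = (c / (1-a)) * (hh a c (t x) * p x - a * p x).
  have [_ d0 _ _] := den_pos ha (tq x) hc.
  have := hh_fix a c (t x) (lt0r_neq0 d0); rewrite /hh => h.
  apply: (@mulfI _ (1-a)); first by rewrite gt_eqF.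
  rewrite [RHS]mulrA [(1-a) * (c / _)]mulrC divfK ?gt_eqF //.
  set hv := a * c / (c - (1 - a) * t x) in h *.
  have -> : hv * p x - a * p x = (hv - a) * p x by ring.
  have -> : c * ((hv - a) * p x) = (hv * c - a * c) * p x by ring.
  rewrite -h; ring.
under eq_integral do rewrite E EFinM.
rewrite integralZl //; last first.
  under eq_fun do rewrite EFinB.
  apply: integrableB => //; first exact: int_h.
  under eq_fun do rewrite EFinM.
  by apply: integrableZl => //; exact: int_p.
under eq_integral do rewrite EFinB.
rewrite integralB_EFin //; first last.
- have -> : EFin \o (fun x => a * p x) = (fun x => a%:E * (EFin \o p) x)%E.
    by apply/funext => x; rewrite /= EFinM.
  by apply: integrableZl => //; exact: int_p.
- exact: int_h.
rewrite -/(gg c) g1.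
under eq_integral do rewrite EFinM.
rewrite integralZl //; last exact: int_p.
by rewrite p1 mule1 -EFinB -EFinM divfK // gt_eqF.
Qed.

End integ.

Theorem lemma8 {d : measure_display} (X : measurableType d) (R : realType)
  (pi : {measure set X -> \bar R}) (pi_sfin : sigma_finite setT pi)
  (r : X -> R) (r_meas : measurable_fun setT r)
  {d' : measure_display} (Omega : measurableType d') (P : probability Omega R)
  (eps : X -> Omega -> R) (eps_meas : forall x, measurable_fun setT (eps x))
  (Q_meas : measurable_fun [set: X] (Qfun P r eps : X -> \bar R))
  (alpha : R) (alpha01 : 0 < alpha < 1)
  (p_ref : X -> R) (p_ref_dens : is_density pi p_ref) :
  let Q := Qfun P r eps in
  let Qs := ess_sup pi Q in
  (0 < Qs)%E -> (Qs < +oo)%E -> (forall x, (Q x <= Qs)%E) ->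
  (alpha%:E >
     (\int[pi]_x ((if Q x == Qs then +oo else Qs / (Qs - Q x)) * (p_ref x)%:E))^-1)%E ->
  let Qr := fun x => fine (Q x) in
  exists w : X -> R,
    [/\ is_ref_density pi p_ref w, in_cone pi p_ref w,
        ae_ref pi p_ref (fun x => LNop pi p_ref alpha Qr w x = w x),
        (forall v : X -> R, is_ref_density pi p_ref v -> in_cone pi p_ref v ->
           ae_ref pi p_ref (fun x => LNop pi p_ref alpha Qr v x = v x) ->
           ae_ref pi p_ref (fun x => v x = w x))
      & ((1 - alpha)%:E * Qs < dot_ref pi p_ref w Qr)%E /\
        (dot_ref pi p_ref w Qr <= Qs)%E].
Proof.
move=> Q Qs Qs0 Qsoo QQs HI Qr.
case: p_ref_dens => mp p0 p1.
have ha := alpha01.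
case/andP: (alpha01) => a0 a1.
have b0 : 0 < 1 - alpha by lra.
have Q0 x : (0 <= Q x)%E.
  rewrite /Q /Qfun mule_ge0 // ?lee_fin ?expR_ge0 //.
  by apply: integral_ge0 => w _; rewrite lee_fin expR_ge0.
have Qsfin : Qs \is a fin_num by rewrite ge0_fin_numE // ltW.
pose q := fine Qs.
have Qsq : Qs = q%:E by rewrite /q fineK.
have q0 : 0 < q by rewrite -lte_fin -Qsq.
have QE x : Q x = (Qr x)%:E.
  by rewrite /Qr fineK // ge0_fin_numE // (le_lt_trans (QQs x)).
have tq x : 0 <= Qr x <= q.
  by rewrite -!lee_fin -QE -Qsq QQs Q0.
have mQr : measurable_fun setT Qr.
  exact: measurableT_comp (fine_measurable measurableT) Q_meas.
set F := fun x => ((if Q x == Qs then +oo else Qs / (Qs - Q x)) * (p_ref x)%:E)%E.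
have FE x : F x = ((if Qr x == q then +oo else (q / (q - Qr x))%:E) * (p_ref x)%:E)%E.
  rewrite /F QE Qsq eqe; case: ifPn => // h.
  by rewrite -EFinB inver subr_eq0 eq_sym (negbTE h) -EFinM.
have F0 x : (0 <= F x)%E.
  rewrite FE; apply: mule_ge0; last by rewrite lee_fin.
  case: ifPn => // tx; rewrite lee_fin divr_ge0 ?ltW //.
  by case/andP: (tq x) => _ h; rewrite subr_gt0 lt_neqAle h andbT.
have hI : (1 < alpha%:E * \int[pi]_x F x)%E.
  have I0 : (0 <= \int[pi]_x F x)%E by apply: integral_ge0 => x _.
  move: HI I0; rewrite -/F; case: (\int[pi]_x F x)%E => [s| |] //.
  - move=> HI s0; rewrite lee_fin in s0; move: HI; rewrite inver.
    case: eqP => [->|rn0]; first by rewrite ltNge leey.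
    have sp : 0 < s by rewrite lt_neqAle eq_sym s0 andbT; apply/eqP.
    rewrite lte_fin -EFinM lte_fin => H.
    by rewrite -(ltr_pM2r sp) mulVf ?gt_eqF in H.
  - by move=> _ _; rewrite mulry gtr0_sg // mul1e ltry.
have [c0 [h0 h0q g1]] := exists_c0 pi p_ref mp p0 alpha q ha q0 Qr mQr tq F FE hI.
have [c [hc0 hcq gc1]] := exists_root pi p_ref mp p0 p1 alpha q ha q0 Qr mQr tq c0 h0 h0q g1.
have hc : (1-alpha)*q < c := lt_le_trans h0 hc0.
pose w x := hh alpha c (Qr x).
have mw : measurable_fun setT w := meas_h alpha q ha Qr mQr tq c hc.
have wpos x : 0 < w x := hh_pos ha (tq x) hc.
have intw : int_ref pi p_ref w = 1%E := gc1.
have dotw : dot_ref pi p_ref w Qr = c%:E :=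
  dot_id pi p_ref mp p0 p1 alpha q ha q0 Qr mQr tq c hc gc1.
have dotw' : (\int[pi]_x (w x * Qr x * p_ref x)%:E)%E = c%:E := dotw.
have cpos : 0 < c by have := mulr_ge0 (ltW b0) (ltW q0); lra.
have wfix x : LNop pi p_ref alpha Qr w x = w x.
  rewrite /LNop /Lop dotw /=.
  have [_ d0 _ _] := den_pos ha (tq x) hc.
  have := hh_fix alpha c (Qr x) (lt0r_neq0 d0); rewrite -/(w x) => h.
  apply: (@mulIf _ c); first by rewrite gt_eqF.
  rewrite divfK ?gt_eqF // -h; ring.
exists w; split.
- by split => // x; exact: ltW.
- split => //.
  + rewrite (_ : int_ref pi p_ref (fun x => `|w x|) = int_ref pi p_ref w) ?intw ?ltry //.
    by rewrite /int_ref -intw; apply: eq_integral => x _; rewrite ger0_norm // ltW.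
  + by apply: aeW => x _; exact: wpos.
- by apply: aeW => x _; exact: wfix.
- move=> v [mv v0 v1] [_ _]; rewrite /ae_ref => vpos vfix.
  have Iv0 : (0 <= dot_ref pi p_ref v Qr)%E.
    by apply: integral_ge0 => x _; rewrite lee_fin !mulr_ge0 //; case/andP: (tq x).
  have Ivq : (dot_ref pi p_ref v Qr <= q%:E)%E.
    apply: (@le_trans _ _ (\int[pi]_x (q%:E * (v x * p_ref x)%:E))%E).
      apply: ge0_le_integral => //.
      - by move=> x _; rewrite lee_fin !mulr_ge0 //; case/andP: (tq x).
      - by apply/measurable_EFinP; do 2 apply: measurable_funM => //.
      - by apply: measurable_funeM; apply/measurable_EFinP; apply: measurable_funM.
      - move=> x _; rewrite -EFinM lee_fin mulrA ler_wpM2r // mulrC ler_wpM2r //.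
        by case/andP: (tq x).
    rewrite ge0_integralZl_EFin //; last by rewrite ltW.
    - by move: v1; rewrite /int_ref => ->; rewrite mule1.
    - by move=> x _; rewrite lee_fin mulr_ge0.
    - by apply/measurable_EFinP; apply: measurable_funM.
  pose cv := fine (dot_ref pi p_ref v Qr).
  have Ivcv : dot_ref pi p_ref v Qr = cv%:E.
    by rewrite /cv fineK // ge0_fin_numE // (le_lt_trans Ivq) ?ltry.
  have Ivcv' : (\int[pi]_x (v x * Qr x * p_ref x)%:E)%E = cv%:E := Ivcv.
  have cv0 : 0 <= cv by rewrite /cv fine_ge0.
  have LE x : LNop pi p_ref alpha Qr v x = (alpha * cv + (1 - alpha) * v x * Qr x) / cv.
    by rewrite /LNop /Lop Ivcv.
  have cvpos : 0 < cv.
    rewrite lt_neqAle cv0 andbT; apply/negP => /eqP cv00.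
    apply: (ae_false pi p_ref mp p0 p1).
    apply: filterS2 vpos vfix => x h1 h2 px.
    have := h2 px; rewrite LE -cv00 invr0 mulr0 => e.
    by have := h1 px; rewrite -e ltxx.
  have rel : {ae pi, forall x, 0 < p_ref x ->
      (1-alpha) * Qr x < cv /\ v x = hh alpha cv (Qr x)}.
    apply: filterS2 vpos vfix => x h1 h2 px.
    have vx := h1 px; have e := h2 px; rewrite LE in e.
    have e' : v x * (cv - (1-alpha) * Qr x) = alpha * cv.
      move: e => /(congr1 (fun y => y * cv)); rewrite divfK ?gt_eqF // => e.
      by rewrite mulrBr -e; ring.
    have dpos : 0 < cv - (1-alpha) * Qr x.
      rewrite ltNge; apply/negP => hle.
      have := mulr_ge0_le0 (ltW vx) hle; rewrite e'.
      have := mulr_gt0 a0 cvpos; lra.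
    split; first lra.
    by rewrite /hh -e' mulfK // gt_eqF.
  have cvc : cv = c.
    case: (ltgtP cv c) => // h.
    - have H := cmp_int pi p_ref mp p0 q Qr mQr tq w v mw mv (fun x => ltW (wpos x)) v0.
      have : (\int[pi]_x (w x * Qr x * p_ref x)%:E <= \int[pi]_x (v x * Qr x * p_ref x)%:E)%E.
        apply: H; apply: filterS rel => x H px; have [hx ->] := H px.
        have tx : 0 <= Qr x <= Qr x by rewrite lexx andbT; case/andP: (tq x).
        exact: hh_anti ha tx hx (ltW h).
      rewrite dotw' Ivcv' lee_fin => H'.
      by have := lt_le_trans h H'; rewrite ltxx.
    - have H := cmp_int pi p_ref mp p0 q Qr mQr tq v w mv mw v0 (fun x => ltW (wpos x)).
      have : (\int[pi]_x (v x * Qr x * p_ref x)%:E <= \int[pi]_x (w x * Qr x * p_ref x)%:E)%E.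
        apply: H; apply: filterS rel => x H px; have [hx ->] := H px.
        exact: hh_anti ha (tq x) hc (ltW h).
      rewrite dotw' Ivcv' lee_fin => H'.
      by have := lt_le_trans h H'; rewrite ltxx.
  apply: filterS rel => x H px; have [_ ->] := H px.
  by rewrite cvc.
- by rewrite dotw Qsq -EFinM lte_fin lee_fin; split.
Qed.
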